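(* Let $I^h\subset\mathbb{K}[S_M^h]$ be a homogeneous ideal and let $J^h\subset\mathbb{K}[\mathbf{y}]$ be the ideal generated by $\varphi(I^h)\cup T$. If $G$ is a Gröbner basis of $J^h$ with respect to the monomial order $<_y$, then $\psi(G)$ is a sparse Gröbner basis of $I^h$ with respect to the graded sparse order $\prec_h$.
   Context: Let $\mathbb{K}$ be a field of characteristic $0$, $M\subset\mathbb{R}^n$ a polytope with $0\in M$, $S_M\subset\mathbb{Z}^n$ the affine semigroup generated by $M\cap\mathbb{Z}^n$ and $S_M^h\subset\mathbb{Z}^{n+1}$ the one generated by $\{(s,1):s\in M\cap\mathbb{Z}^n\}$, both assumed pointed. $\mathbb{K}[S]$ is the semigroup algebra with monomials $X^s$, $X^sX^t=X^{s+t}$; $\mathbb{K}[S_M^h]$ is graded by $\deg X^{(s,d)}=d$, and ''homogeneous'' refers to this grading. $\chi:\mathbb{K}[S_M^h]\to\mathbb{K}[S_M]$, $X^{(s,d)}\mapsto X^s$. The affine degree $\delta^A(X^s)$ is the least $d$ with $(s,d)\in S_M^h$, extended to polynomials by taking the maximum over the support; the sparse degree of $f\in\mathbb{K}[S_M^h]$ is $\delta(f)=\delta^A(\chi(f))$. Fix a monomial order $<_M$ on $\mathbb{K}[S_M]$; the sparse order: $X^s\prec X^r$ iff $\delta^A(X^s)<\delta^A(X^r)$, or equality and $X^s<_MX^r$; the graded sparse order on monomials of $\mathbb{K}[S_M^h]$: $X^{(s,d)}\prec_hX^{(r,d')}$ iff $d<d'$, or $d=d'$ and $X^s\prec X^r$.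 Divisibility: $X^{(s,d_s)}\mid_\delta X^{(r,d_r)}$ if some monomial $X^{(t,d_t)}$ satisfies $X^{(s,d_s)}X^{(t,d_t)}=X^{(r,d_r)}$ and $\delta(X^{(s,d_s)})+\delta(X^{(t,d_t)})=\delta(X^{(r,d_r)})$. A sparse Gröbner basis of an ideal $I^h\subset\mathbb{K}[S_M^h]$ w.r.t. $\prec_h$ is a subset of $I^h$ generating $I^h$ such that for every nonzero $f\in I^h$ some element $g$ of it satisfies $\mathrm{LM}_{\prec_h}(g)\mid_\delta\mathrm{LM}_{\prec_h}(f)$. Let $a_0,\dots,a_m$ be the elements of $\{(s,1):s\in M\cap\mathbb{Z}^n\}$ with $a_0=(0,1)$. Let $\mathbb{K}[\mathbf{y}]=\mathbb{K}[y_0,\dots,y_m]$ with standard grading and $\psi:\mathbb{K}[\mathbf{y}]\to\mathbb{K}[S_M^h]$ the degree-preserving $\mathbb{K}$-algebra epimorphism $y_i\mapsto X^{a_i}$; its kernel $T$ is the (homogeneous, prime) lattice ideal $\langle\mathbf{y}^u-\mathbf{y}^v:\psi(\mathbf{y}^u)=\psi(\mathbf{y}^v)\rangle$. Fix any monomial order $\tilde<$ on $\mathbb{K}[\mathbf{y}]$ and define the monomial order $<_y$: $\mathbf{y}^a<_y\mathbf{y}^b$ iff $\deg\mathbf{y}^a<\deg\mathbf{y}^b$; or the total degrees are equal and $\deg_{y_0}\mathbf{y}^a>\deg_{y_0}\mathbf{y}^b$; or both are equal and $\chi(\psi(\mathbf{y}^a))<_M\chi(\psi(\mathbf{y}^b))$;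 or all these are equal and $\mathbf{y}^a\,\tilde<\,\mathbf{y}^b$. For $g\in\mathbb{K}[\mathbf{y}]$, $\eta(g)$ is the normal form (remainder of division by a Gröbner basis) of $g$ with respect to $T$ and $<_y$. Define $\varphi:\mathbb{K}[S_M^h]\to\mathbb{K}[\mathbf{y}]$ by $\varphi(f)=\eta(g)$ for any $g$ with $\psi(g)=f$ (well defined). *)

(* Defs.v *)
From HB Require Import structures.
From mathcomp Require Import all_boot all_order all_algebra.
From mathcomp Require Import finmap.
From mathcomp.multinomials Require Export monalg.
From Stdlib Require Import ClassicalEpsilon.

Set Implicit Arguments.
Unset Strict Implicit.
Unset Printing Implicit Defensive.

Import Order.TTheory GRing.Theory Num.Theory.
Local Open Scope ring_scope.

Definition in_conv (R : realFieldType) (n : nat) (V : seq 'rV[R]_n)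
    (x : 'rV[R]_n) : Prop :=
  exists l : 'I_(size V) -> R,
    [/\ forall i, 0 <= l i, \sum_i l i = 1 & \sum_i l i *: V`_i = x].

Definition lattice_pt (R : realFieldType) (n : nat) (z : 'rV[int]_n) : 'rV[R]_n :=
  map_mx (fun c : int => c%:~R) z.

Definition is_ideal (A : comRingType) (I : A -> Prop) : Prop :=
  [/\ I 0, (forall f g, I f -> I g -> I (f + g)) &
      (forall h f, I f -> I (h * f))].

Definition ideal_gen (A : comRingType) (S : A -> Prop) (f : A) : Prop :=
  exists l : seq (A * A),
    (forall p, p \in l -> S p.2) /\ f = \sum_(p <- l) p.1 * p.2.

Definition monomial_order (T : Type) (S : T -> Prop) (add : T -> T -> T)
    (lt : T -> T -> bool) : Prop :=
  [/\ (forall s, S s -> ~~ lt s s),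
      (forall s r t, S s -> S r -> S t -> lt s r -> lt r t -> lt s t),
      (forall s r, S s -> S r -> s <> r -> lt s r \/ lt r s),
      (forall s r u, S s -> S r -> S u -> lt s r -> lt (add s u) (add r u)) &
      (forall P : T -> Prop, (exists s, S s /\ P s) ->
         exists s, [/\ S s, P s & forall r, S r -> P r -> ~~ lt r s])].

Definition is_LM (K : choiceType) (G : zmodType) (lt : K -> K -> bool)
    (f : {malg G[K]}) (u : K) : Prop :=
  u \in msupp f /\ (forall v, v \in msupp f -> v != u -> lt v u).

Section Semigroup.
Variables (n m : nat) (a : 'I_m.+1 -> 'rV[int]_n).

(* (s,d) in S_M^h  iff  s is a sum of d lattice points a_i           *)
(* (with repetitions), i.e. (s,d) = sum_i t_i (a_i,1) with t_i >= 0  *)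
Definition memSh (p : 'rV[int]_n * nat) : bool :=
  [exists t : {ffun 'I_m.+1 -> 'I_(p.2.+1)},
     ((\sum_i (t i : nat))%N == p.2) && (\sum_i a i *+ t i == p.1)].

Definition Sh := {p : 'rV[int]_n * nat | memSh p}.
HB.instance Definition _ := [Choice of Sh by <:].

Lemma memSh0 : memSh (0, 0%N).
Proof.
apply/existsP; exists [ffun=> ord0]; apply/andP; split.
  by rewrite big1 // => i _; rewrite ffunE.
by apply/eqP; rewrite big1 // => i _; rewrite ffunE mulr0n.
Qed.

Lemma memShD p q : memSh p -> memSh q -> memSh (p.1 + q.1, (p.2 + q.2)%N).
Proof.
case/existsP=> t /andP[/eqP Ht /eqP Hs]; case/existsP=> u /andP[/eqP Hu /eqP Hr].
have bnd i : (t i + u i < (p.2 + q.2).+1)%N.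
  by rewrite ltnS leq_add // -ltnS.
apply/existsP; exists [ffun i => inord (t i + u i)]; apply/andP; split => /=.
  apply/eqP; transitivity (\sum_i (t i + u i))%N; last by rewrite big_split /= Ht Hu.
  by apply: eq_bigr => i _; rewrite ffunE inordK.
apply/eqP; transitivity (\sum_i (a i *+ t i + a i *+ u i)); last by rewrite big_split /= Hs Hr.
by apply: eq_bigr => i _; rewrite ffunE inordK // mulrnDr.
Qed.

Definition Sh0 : Sh := exist _ (0, 0%N) memSh0.
Definition ShD (p q : Sh) : Sh :=
  exist _ ((val p).1 + (val q).1, ((val p).2 + (val q).2)%N)
    (memShD (valP p) (valP q)).

Lemma ShDA : associative ShD.
Proof. by move=> p q r; apply: val_inj => /=; rewrite addrA addnA. Qed.
Lemma ShDC : commutative ShD.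
Proof. by move=> p q; apply: val_inj => /=; rewrite addrC addnC. Qed.
Lemma Sh0D : left_id Sh0 ShD.
Proof. by case=> [[s d] h]; apply: val_inj => /=; rewrite add0r add0n. Qed.
Lemma ShD0 : right_id Sh0 ShD.
Proof. by move=> p; rewrite ShDC Sh0D. Qed.

Lemma memSh_deg0 s : memSh (s, 0%N) -> s = 0.
Proof.
case/existsP=> t /andP[_ /eqP /= <-]; rewrite big1 // => i _.
by case: (t i) => -[|k] //= _; rewrite mulr0n.
Qed.

Lemma ShD_eq0 p q : ShD p q = Sh0 -> p = Sh0 /\ q = Sh0.
Proof.
case: p q => [[s d] hp] [[r e] hq] /(congr1 val) /= [_ /eqP].
rewrite addn_eq0 => /andP[/eqP Hd /eqP He]; subst d e.
by split; apply: val_inj => /=; congr (_, _); apply: memSh_deg0.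
Qed.

HB.instance Definition _ := Choice_isMonomialDef.Build Sh ShDA Sh0D ShD0 ShD_eq0.
HB.instance Definition _ := MonomialDef_isConomialDef.Build Sh ShDC.

(* s in S_M (the semigroup generated by M cap Z^n, 0 in M)             *)
Definition inSM (s : 'rV[int]_n) : Prop := exists d, memSh (s, d).

Definition deltaA (s : 'rV[int]_n) : nat :=
  match excluded_middle_informative (exists d, memSh (s, d)) with
  | left H => ex_minn H
  | right _ => 0%N
  end.

Definition sdeg (p : Sh) : nat := deltaA (val p).1.

Definition sparse_lt (ltM : rel 'rV[int]_n) (s r : 'rV[int]_n) : bool :=
  (deltaA s < deltaA r)%N || ((deltaA s == deltaA r) && ltM s r).

Definition gsparse_lt (ltM : rel 'rV[int]_n) (p q : Sh) : bool :=
  ((val p).2 < (val q).2)%N ||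
  (((val p).2 == (val q).2) && sparse_lt ltM (val p).1 (val q).1).

Definition ddivides (p q : Sh) : Prop :=
  exists t : Sh, ShD p t = q /\ (sdeg p + sdeg t)%N = sdeg q.

Definition hcomp (K : ringType) (e : nat) (f : {malg K[Sh]}) : {malg K[Sh]} :=
  \sum_(p <- msupp f | (val p).2 == e) << f@_p *g p >>.

Definition homogeneous_ideal (K : comRingType) (I : {malg K[Sh]} -> Prop) :=
  is_ideal I /\ (forall f e, I f -> I (hcomp e f)).

(* The polynomial ring K[y_0..y_m] (monomials 'X_{1..m.+1}) and psi   *)
Definition tdeg (u : 'X_{1..m.+1}) : nat := (\sum_i u i)%N.

(* chi(psi(y^u)) = X^(sum_i u_i a_i) *)
Definition chipsi (u : 'X_{1..m.+1}) : 'rV[int]_n := \sum_i a i *+ u i.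

Lemma memSh_psi (u : 'X_{1..m.+1}) : memSh (chipsi u, tdeg u).
Proof.
have bnd i : (u i < (tdeg u).+1)%N.
  by rewrite ltnS /tdeg (bigD1 i) //= leq_addr.
apply/existsP; exists [ffun i => inord (u i)]; apply/andP; split => /=.
  by apply/eqP/eq_bigr => i _; rewrite ffunE inordK.
by apply/eqP/eq_bigr => i _; rewrite ffunE inordK.
Qed.

Definition psimon (u : 'X_{1..m.+1}) : Sh := exist _ (chipsi u, tdeg u) (memSh_psi u).

Definition psi (K : ringType) (g : {malg K['X_{1..m.+1}]}) : {malg K[Sh]} :=
  \sum_(u <- msupp g) << g@_u *g psimon u >>.

Definition lt_y (ltM : rel 'rV[int]_n) (ltT : rel 'X_{1..m.+1})
    (u v : 'X_{1..m.+1}) : bool :=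
  (tdeg u < tdeg v)%N ||
  ((tdeg u == tdeg v) &&
   ((v ord0 < u ord0)%N ||
    ((u ord0 == v ord0) &&
     (ltM (chipsi u) (chipsi v) ||
      ((chipsi u == chipsi v) && ltT u v))))).

Definition Tker (K : ringType) (g : {malg K['X_{1..m.+1}]}) : Prop :=
  psi g = 0.

(* r is the normal form eta(g) of g w.r.t. T and <_y: g - r in T and  *)
(* no monomial of r is the leading monomial of a nonzero element of T *)
Definition is_NF (K : ringType) (ltM : rel 'rV[int]_n) (ltT : rel 'X_{1..m.+1})
    (r g : {malg K['X_{1..m.+1}]}) : Prop :=
  Tker (g - r) /\
  (forall u, u \in msupp r ->
     ~ exists h : {malg K['X_{1..m.+1}]}, [/\ Tker h, h != 0 & is_LM (lt_y ltM ltT) h u]).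

(* phi(I^h) = { eta(g) | psi(g) in I^h } *)
Definition phi_img (K : ringType) (ltM : rel 'rV[int]_n) (ltT : rel 'X_{1..m.+1})
    (I : {malg K[Sh]} -> Prop) (r : {malg K['X_{1..m.+1}]}) : Prop :=
  exists f, I f /\ exists g, psi g = f /\ is_NF ltM ltT r g.

End Semigroup.

Definition is_groebner (K : comRingType) (k : nat) (lt : rel 'X_{1..k})
    (J : {malg K['X_{1..k}]} -> Prop) (G : seq {malg K['X_{1..k}]}) : Prop :=
  (forall g, g \in G -> J g) /\
  (forall f, J f -> f != 0 ->
     exists2 g, g \in G &
       g != 0 /\ exists ug uf,
         [/\ is_LM lt g ug, is_LM lt f uf & exists w, mulcm ug w = uf]).

Definition is_sparse_groebner (K : comRingType) (n m : nat) (a : 'I_m.+1 -> 'rV[int]_n)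
    (ltM : rel 'rV[int]_n) (I : {malg K[Sh a]} -> Prop)
    (G : seq {malg K[Sh a]}) : Prop :=
  [/\ (forall g, g \in G -> I g),
      (forall f, I f -> ideal_gen (fun g => g \in G) f) &
      (forall f, I f -> f != 0 ->
         exists2 g, g \in G &
           g != 0 /\ exists pg pf,
             [/\ is_LM (gsparse_lt ltM) g pg, is_LM (gsparse_lt ltM) f pf
               & ddivides pg pf])].

(* Main.v *)
Require Import Defs.
From HB Require Import structures.
From mathcomp Require Import all_boot all_order all_algebra.
From mathcomp Require Import finmap.
From mathcomp.multinomials Require Import monalg.
From Stdlib Require Import Classical ClassicalEpsilon.
From mathcomp Require Import zify.

Import Order.TTheory GRing.Theory Num.Theory.
Local Open Scope ring_scope.

Definition mkcm (k : nat) (f : 'I_k -> nat) : 'X_{1..k} :=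
  [cmonom f i | i in [fset j | j : 'I_k]%fset]%M.
Lemma mkcmE k f i : @mkcm k f i = f i.
Proof. by rewrite /mkcm cmE /= fsfun_fun ifT // inE. Qed.

Lemma nat_min (Q : nat -> Prop) : (exists n, Q n) ->
  exists n, Q n /\ forall k, Q k -> (n <= k)%N.
Proof.
move=> [n Qn]; elim: n {-2}n (leqnn n) Qn => [|N IH] n.
  rewrite leqn0 => /eqP -> Q0; exists 0%N; split => // k _.
move=> le Qn.
case: (classic (exists k, (k < n)%N /\ Q k)) => [[k [lt Qk]]|H].
  apply: (IH k) => //; lia.
exists n; split => // k Qk; rewrite leqNgt; apply/negP => lt; apply: H; by exists k.
Qed.

Lemma nat_max (Q : nat -> Prop) B : (exists n, Q n) -> (forall n, Q n -> (n <= B)%N) ->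
  exists n, Q n /\ forall k, Q k -> (k <= n)%N.
Proof.
move=> [n Qn] hB.
have [k [Qk Hk]] : exists k, Q (B - k)%N /\ forall j, Q (B - j)%N -> (k <= j)%N.
  apply: nat_min; exists (B - n)%N; by rewrite subKn ?hB.
exists (B - k)%N; split => // j Qj.
have := Hk (B - j)%N; rewrite subKn ?hB //; move/(_ Qj); have := hB _ Qj; lia.
Qed.

Lemma sum_fset1 (X : choiceType) (V : zmodType) (s : {fset X}) (F : X -> V) u0 :
  u0 \in s -> (forall v, v \in s -> v != u0 -> F v = 0) ->
  \sum_(v <- s) F v = F u0.
Proof.
move=> hu hF; rewrite (big_fsetD1 u0) //= big_seq big1 ?addr0 // => v.
by rewrite in_fsetD1 => /andP[ne vs]; apply: hF.
Qed.

Lemma seq_max (X : eqType) (lt : X -> X -> bool) (s : seq X) :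
  (forall x y z, lt x y -> lt y z -> lt x z) ->
  (forall x y, x \in s -> y \in s -> x != y -> lt x y \/ lt y x) ->
  s != [::] -> exists2 x, x \in s & forall y, y \in s -> y != x -> lt y x.
Proof.
move=> tr; elim: s => [//|x s IH] tot _.
case: (altP (s =P [::])) => [->|sn0].
  exists x; first by rewrite inE. by move=> y; rewrite inE => ->.
have [x' x's Hx'] : exists2 x', x' \in s & forall y, y \in s -> y != x' -> lt y x'.
  apply: IH => // y z ys zs; apply: tot; rewrite inE ?ys ?zs orbT //.
case: (altP (x =P x')) => [->|ne].
  exists x'; first by rewrite inE x's orbT.
  move=> y; rewrite inE => /orP[/eqP->|]; [by rewrite eqxx|exact: Hx'].
have := tot x x'; rewrite !inE eqxx x's orbT => /(_ isT isT ne) [lxx'|lx'x].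
  exists x'; first by rewrite inE x's orbT.
  move=> y; rewrite inE => /orP[/eqP->|]; [by []|exact: Hx'].
exists x; first by rewrite inE eqxx.
move=> y; rewrite inE => /orP[/eqP->|ys yx]; first by rewrite eqxx.
case: (altP (y =P x')) => [->//|yx']; exact: tr (Hx' _ ys yx') lx'x.
Qed.

Lemma LM_exists (X : choiceType) (V : zmodType) (lt : X -> X -> bool) (h : {malg V[X]}) :
  (forall x y z, lt x y -> lt y z -> lt x z) ->
  (forall x y, x != y -> lt x y \/ lt y x) -> h != 0 ->
  exists u, is_LM lt h u.
Proof.
move=> tr tot hn0.
have : (msupp h : seq X) != [::].
  apply/eqP => e; move/negP: hn0; apply; apply/eqP/malgP => k.
  rewrite mcoeff0 mcoeff_outdom //; apply/negP => /=.
  by rewrite -[k \in _]/(k \in (msupp h : seq X)) e.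
case/(@seq_max _ lt _ tr (fun x y _ _ => tot x y)) => x xs Hx; exists x; split => //.
Qed.

Lemma LM_uniq (X : choiceType) (V : zmodType) (lt : X -> X -> bool) (h : {malg V[X]}) u u' :
  (forall x y z, lt x y -> lt y z -> lt x z) -> (forall x, ~~ lt x x) ->
  is_LM lt h u -> is_LM lt h u' -> u = u'.
Proof.
move=> tr irr [us Hu] [us' Hu']; apply/eqP; apply/negPn/negP => ne.
have ne' : u' != u by rewrite eq_sym.
by have := irr u; rewrite (tr _ _ _ (Hu' _ us ne) (Hu _ us' ne')).
Qed.

Section Lex.
Variables (X : Type) (A : eqType) (k : X -> A) (r : rel A) (r2 : rel X).
Definition lex u v := r (k u) (k v) || (k u == k v) && r2 u v.
Lemma lex_trans :
  (forall u v w, r (k u) (k v) -> r (k v) (k w) -> r (k u) (k w)) ->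
  (forall u v w, r2 u v -> r2 v w -> r2 u w) ->
  forall u v w, lex u v -> lex v w -> lex u w.
Proof.
move=> h1 h2 u v w; rewrite /lex.
case/orP => [a1|/andP[/eqP e1 b1]]; case/orP => [a2|/andP[/eqP e2 b2]].
- by rewrite (h1 _ _ _ a1 a2).
- by rewrite -e2 a1.
- by rewrite e1 a2.
- by rewrite e1 e2 eqxx (h2 _ _ _ b1 b2) orbT.
Qed.
Lemma lex_irr : (forall u, ~~ r (k u) (k u)) -> (forall u, ~~ r2 u u) -> forall u, ~~ lex u u.
Proof. by move=> h1 h2 u; rewrite /lex negb_or h1 negb_and h2 orbT. Qed.
Lemma lex_total :
  (forall u v, k u != k v -> r (k u) (k v) \/ r (k v) (k u)) ->
  (forall u v, k u = k v -> u <> v -> r2 u v \/ r2 v u) ->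
  forall u v, u <> v -> lex u v \/ lex v u.
Proof.
move=> h1 h2 u v ne; rewrite /lex; case: (altP (k u =P k v)) => [e|ne'].
  by rewrite e eqxx; case: (h2 _ _ e ne) => ->; [left|right]; rewrite orbT.
by case: (h1 _ _ ne') => ->; [left|right].
Qed.
Lemma lex_mul (f : X -> X) :
  (forall u v, r (k u) (k v) -> r (k (f u)) (k (f v))) ->
  (forall u v, k u = k v -> k (f u) = k (f v)) ->
  (forall u v, r2 u v -> r2 (f u) (f v)) ->
  forall u v, lex u v -> lex (f u) (f v).
Proof.
move=> h1 h2 h3 u v; rewrite /lex; case/orP => [a1|/andP[/eqP e1 b1]].
  by rewrite h1.
by rewrite (h2 _ _ e1) eqxx h3 ?orbT.
Qed.
End Lex.
Arguments lex {X A} k r r2 u v.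

Section IdealGen.
Variables (A : comRingType) (S : A -> Prop).
Lemma IG0 : ideal_gen S 0.
Proof. by exists [::]; rewrite big_nil. Qed.
Lemma IGgen g : S g -> ideal_gen S g.
Proof. by move=> Sg; exists [:: (1, g)]; split; [move=> p; rewrite inE => /eqP ->|rewrite big_seq1 mul1r]. Qed.
Lemma IGadd f g : ideal_gen S f -> ideal_gen S g -> ideal_gen S (f + g).
Proof.
move=> [l1 [h1 ->]] [l2 [h2 ->]]; exists (l1 ++ l2); split; last by rewrite big_cat.
by move=> p; rewrite mem_cat => /orP[/h1|/h2].
Qed.
Lemma IGmul h f : ideal_gen S f -> ideal_gen S (h * f).
Proof.
move=> [l [hl ->]]; exists [seq (h * p.1, p.2) | p <- l]; split.
  move=> p /mapP [q ql ->] /=; exact: hl.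
by rewrite big_map mulr_sumr; apply: eq_bigr => p _; rewrite mulrA.
Qed.
Lemma IGopp f : ideal_gen S f -> ideal_gen S (- f).
Proof. by move=> H; rewrite -mulN1r; apply: IGmul. Qed.
Lemma IGsub f g : ideal_gen S f -> ideal_gen S g -> ideal_gen S (f - g).
Proof. by move=> Hf Hg; apply: IGadd => //; apply: IGopp. Qed.
Lemma IG_in (J : A -> Prop) f : is_ideal J -> (forall x, S x -> J x) -> ideal_gen S f -> J f.
Proof.
case=> J0 JD JM SJ [l [hl ->]]; elim: l hl => [|p l IH] hl; first by rewrite big_nil.
rewrite big_cons; apply: JD; first by apply: JM; apply: SJ; apply: hl; rewrite inE eqxx.
by apply: IH => q ql; apply: hl; rewrite inE ql orbT.
Qed.
End IdealGen.

Section Main.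
Variables (n m : nat) (a : 'I_m.+1 -> 'rV[int]_n).
Hypothesis ha0 : a ord0 = 0.
Variables (ltM : rel 'rV[int]_n) (ltT : rel 'X_{1..m.+1}).
Hypothesis hltM : monomial_order (inSM a) +%R ltM.
Hypothesis hltT : monomial_order (fun _ => True) (@mulcm _) ltT.

Local Notation lty := (lt_y a ltM ltT).
Implicit Types (u v w : 'X_{1..m.+1}).
Local Notation tdeg := (@tdeg m).
Local Notation chipsi := (chipsi a).
Local Notation psimon := (psimon a).

Lemma tdegM u v : tdeg (mulcm u v) = (tdeg u + tdeg v)%N.
Proof. by rewrite /Defs.tdeg -big_split; apply: eq_bigr => i _; rewrite mulcmE. Qed.

Lemma chipsiM u v : chipsi (mulcm u v) = chipsi u + chipsi v.
Proof. by rewrite /Defs.chipsi -big_split; apply: eq_bigr => i _; rewrite mulcmE mulrnDr. Qed.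

Lemma psimonM u v : psimon (mulcm u v) = ShD (psimon u) (psimon v).
Proof. by apply: val_inj; rewrite /= chipsiM tdegM. Qed.

Lemma u0_le u : (u ord0 <= tdeg u)%N.
Proof. by rewrite /Defs.tdeg (bigD1 ord0) //= leq_addr. Qed.

Lemma chipsi_inSM u : inSM a (chipsi u).
Proof. by exists (tdeg u); apply: memSh_psi. Qed.

Lemma lty_lex : lty =2 lex tdeg ltn (lex (fun u : 'X_{1..m.+1} => u ord0) (fun x y => y < x)%N
                       (lex chipsi ltM ltT)).
Proof. by []. Qed.

Lemma lty_trans u v w : lty u v -> lty v w -> lty u w.
Proof.
case: hltM => _ trM _ _ _; case: hltT => _ trT _ _ _.
rewrite !lty_lex; apply: lex_trans => [x y z|]; first exact: ltn_trans.
apply: lex_trans => [x y z h1 h2|]; first exact: ltn_trans h2 h1.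
apply: lex_trans => [x y z|x y z]; first by apply: trM; apply: chipsi_inSM.
exact: trT.
Qed.

Lemma lty_irr u : ~~ lty u u.
Proof.
case: hltM => irM _ _ _ _; case: hltT => irT _ _ _ _.
rewrite lty_lex; apply: lex_irr => [x|]; first by rewrite /ltn /= ltnn.
apply: lex_irr => [x|]; first by rewrite /= ltnn.
apply: lex_irr => x; [apply: irM; apply: chipsi_inSM|exact: irT].
Qed.

Lemma lty_total u v : u <> v -> lty u v \/ lty v u.
Proof.
case: hltM => _ _ toM _ _; case: hltT => _ _ toT _ _.
rewrite !lty_lex; apply: lex_total => [x y ne|].
  by case: (ltngtP (tdeg x) (tdeg y)) ne => //; [left|right].
move=> x y _; apply: lex_total => [x' y' ne|].
  by case: (ltngtP (x' ord0) (y' ord0)) ne => //; [right|left].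
move=> x' y' _; apply: lex_total => [x'' y'' ne|x'' y'' _ ne].
  apply: toM; try apply: chipsi_inSM; exact/eqP.
exact: toT.
Qed.

Lemma lty_totalb u v : u != v -> lty u v \/ lty v u.
Proof. by move/eqP; apply: lty_total. Qed.

Lemma lty_mul u v w : lty u v -> lty (mulcm u w) (mulcm v w).
Proof.
case: hltM => _ _ _ mM _; case: hltT => _ _ _ mT _.
rewrite !lty_lex; apply: (@lex_mul _ _ _ _ _ (fun x => mulcm x w)) => [x y|x y e|].
- by rewrite /ltn /= !tdegM /= ltn_add2r.
- by rewrite !tdegM e.
apply: (@lex_mul _ _ _ _ _ (fun x => mulcm x w)) => [x y|x y e|].
- by rewrite /= !mulcmE ltn_add2r.
- by rewrite !mulcmE e.
apply: (@lex_mul _ _ _ _ _ (fun x => mulcm x w)) => [x y h|x y e|x y h].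
- by rewrite !chipsiM; apply: mM => //; apply: chipsi_inSM.
- by rewrite !chipsiM e.
exact: mT.
Qed.

Lemma lty_min (P : 'X_{1..m.+1} -> Prop) : (exists u, P u) ->
  exists u, P u /\ forall v, P v -> ~~ lty v u.
Proof.
move=> [u0 Pu0].
have [d [[u1 [Pu1 du1]] Hd]] := nat_min (fun d => exists u, P u /\ tdeg u = d)
   (ex_intro _ _ (ex_intro _ u0 (conj Pu0 erefl))).
have hB : forall e, (exists u, (P u /\ tdeg u = d) /\ u ord0 = e) -> (e <= d)%N.
  by move=> e [u [[_ <-] <-]]; apply: u0_le.
have [e [[u2 [[Pu2 du2] eu2]] He]] := nat_max (fun e => exists u, (P u /\ tdeg u = d) /\ u ord0 = e) d
   (ex_intro _ _ (ex_intro _ u1 (conj (conj Pu1 du1) erefl))) hB.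
case: hltM => _ _ _ _ minM; case: hltT => _ _ _ _ minT.
have [s [_ [u3 [[[Pu3 du3] eu3] su3]] Hs]] := minM
  (fun s => exists u, ((P u /\ tdeg u = d) /\ u ord0 = e) /\ chipsi u = s)
  (ex_intro _ (chipsi u2) (conj (chipsi_inSM u2) (ex_intro _ u2 (conj (conj (conj Pu2 du2) eu2) erefl)))).
have [w [_ [[[Pw dw] ew] sw] Hw]] := minT
  (fun u => ((P u /\ tdeg u = d) /\ u ord0 = e) /\ chipsi u = s)
  (ex_intro _ u3 (conj I (conj (conj (conj Pu3 du3) eu3) su3))).
exists w; split => // v Pv; rewrite /lt_y negb_or negb_and dw.
have dv : (d <= tdeg v)%N by apply: Hd; exists v.
rewrite ltnNge dv /=; case: (altP (tdeg v =P d)) => [Edv|] //=.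
have ve : (v ord0 <= e)%N by apply: He; exists v.
rewrite ew sw negb_or -leqNgt ve /= negb_and; case: (altP (v ord0 =P e)) => //= Eve.
rewrite negb_or Hs /=; [|exact: chipsi_inSM|by exists v].
rewrite negb_and; case: (altP (chipsi v =P s)) => //= Esv; exact: Hw.
Qed.

Variable K : fieldType.
Implicit Types (g h : {malg K['X_{1..m.+1}]}).
Local Notation psi := (@psi n m a K).

Lemma psiU c u : psi << c *g u >> = << c *g psimon u >>.
Proof.
rewrite /Defs.psi msuppU; case: eqP => [->|_]; first by rewrite big_nil monalgU0.
by rewrite big_seq_fset1 mcoeffUU.
Qed.

Lemma psi_coef g p : (psi g)@_p = \sum_(v <- msupp g) g@_v *+ (psimon v == p).
Proof. rewrite /Defs.psi raddf_sum; by apply: eq_bigr => v _; rewrite /= mcoeffU. Qed.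

Lemma psi_coefw (d : {fset 'X_{1..m.+1}}) g p : (msupp g `<=` d)%fset ->
  (psi g)@_p = \sum_(v <- d) g@_v *+ (psimon v == p).
Proof.
move=> le; rewrite psi_coef (big_fset_incl _ le) // => x _ /mcoeff_outdom ->.
by rewrite mul0rn.
Qed.

Lemma psiB g1 g2 : psi (g1 - g2) = psi g1 - psi g2.
Proof.
have s1 : (msupp g1 `<=` msupp g1 `|` msupp g2)%fset by apply: fsubsetUl.
have s2 : (msupp g2 `<=` msupp g1 `|` msupp g2)%fset by apply: fsubsetUr.
have h1 := msuppB_le g1 g2.
apply/malgP => p.
have -> : (psi g1 - psi g2)@_p = (psi g1)@_p - (psi g2)@_p by exact: mcoeffB.
have E1 := (@psi_coefw _ (g1 - g2) p h1).
have E2 := (@psi_coefw _ g1 p s1).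
have E3 := (@psi_coefw _ g2 p s2).
have S : \sum_(v <- (msupp g1 `|` msupp g2)%fset) (g1 - g2)@_v *+ (psimon v == p) =
   \sum_(v <- (msupp g1 `|` msupp g2)%fset) g1@_v *+ (psimon v == p) -
   \sum_(v <- (msupp g1 `|` msupp g2)%fset) g2@_v *+ (psimon v == p).
  rewrite -sumrB; apply: eq_bigr => v _.
  have -> : (g1 - g2)@_v = g1@_v - g2@_v by exact: mcoeffB.
  by rewrite mulrnBl.
exact: (etrans E1 (etrans S (congr2 (fun x y => x - y) (esym E2) (esym E3)))).
Qed.

Lemma psi0 : psi 0 = 0.
Proof. by rewrite /Defs.psi msupp0 big_nil. Qed.

Lemma psiN g : psi (- g) = - psi g.
Proof. by rewrite -sub0r psiB psi0 sub0r. Qed.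

Lemma psiD g1 g2 : psi (g1 + g2) = psi g1 + psi g2.
Proof. by move: (psiB g1 (- g2)); rewrite opprK psiN opprK. Qed.

Lemma psi_sum (T : Type) (l : seq T) (F : T -> {malg K['X_{1..m.+1}]}) :
  psi (\sum_(x <- l) F x) = \sum_(x <- l) psi (F x).
Proof. exact: (big_morph psi psiD psi0). Qed.

Lemma psiM g1 g2 : psi (g1 * g2) = psi g1 * psi g2.
Proof.
rewrite malgME psi_sum [in RHS]/Defs.psi mulr_suml; apply: eq_bigr => k1 _.
rewrite psi_sum mulr_sumr; apply: eq_bigr => k2 _.
rewrite psiU malgM_def fgmulUU.
exact: (congr1 (fun q => << g1@_k1 * g2@_k2 *g q >>) (psimonM k1 k2)).
Qed.

Lemma deltaA_le s d : memSh a (s, d) -> (deltaA a s <= d)%N.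
Proof.
move=> H; rewrite /deltaA; case: excluded_middle_informative => [E|[]]; last by exists d.
by case: ex_minnP => k _ Hk; apply: Hk.
Qed.

Lemma deltaA_mem s : inSM a s -> memSh a (s, deltaA a s).
Proof.
move=> H; rewrite /deltaA; case: excluded_middle_informative => [E|//].
by case: ex_minnP.
Qed.

Lemma chipsi_mkcm (f : 'I_m.+1 -> nat) : chipsi (mkcm _ f) = \sum_i a i *+ f i.
Proof. by rewrite /Defs.chipsi; apply: eq_bigr => i _; rewrite mkcmE. Qed.

Lemma tdeg_mkcm (f : 'I_m.+1 -> nat) : tdeg (mkcm _ f) = (\sum_i f i)%N.
Proof. by rewrite /Defs.tdeg; apply: eq_bigr => i _; rewrite mkcmE. Qed.

Lemma psimon_surj p : exists u, psimon u = p.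
Proof.
case: p => [[s d] H]; have := H; case/existsP => t /andP[/eqP Ht /eqP Hs].
exists (mkcm _ (fun i => t i)); apply: val_inj => /=.
by rewrite (chipsi_mkcm) tdeg_mkcm Ht Hs.
Qed.

Lemma deltaA_le_u v : (deltaA a (chipsi v) <= tdeg v - v ord0)%N.
Proof.
pose v' := mkcm _ (fun i => if i == ord0 then 0%N else v i).
have E1 : chipsi v' = chipsi v.
  rewrite (chipsi_mkcm) /Defs.chipsi (bigD1 ord0) //= [in RHS](bigD1 ord0) //= ha0 !mul0rn.
  by congr (_ + _); apply: eq_bigr => i /negbTE ->.
have E2 : tdeg v' = (tdeg v - v ord0)%N.
  rewrite tdeg_mkcm /Defs.tdeg (bigD1 ord0) //= [in RHS](bigD1 ord0) //= ?eqxx ?add0n addKn.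
  by apply: eq_bigr => i /negbTE ->.
by have := memSh_psi a v'; rewrite E1 E2; apply: deltaA_le.
Qed.

Definition fibmin u := forall v, psimon v = psimon u -> ~~ lty v u.

Lemma deltaA_fibmin u : fibmin u -> deltaA a (chipsi u) = (tdeg u - u ord0)%N.
Proof.
move=> fu; have Dle := deltaA_le_u u.
set D := deltaA a (chipsi u) in Dle *.
have HD : (D <= tdeg u)%N by apply: deltaA_le; apply: memSh_psi.
have := deltaA_mem _ (chipsi_inSM u); rewrite -/D.
case/existsP => t /andP[/eqP Ht /eqP Hs].
pose v := mkcm _ (fun i => t i + (if i == ord0 then tdeg u - D else 0))%N.
have Ec : chipsi v = chipsi u.
  rewrite (chipsi_mkcm); under eq_bigr do rewrite mulrnDr.
  rewrite big_split /= Hs big1 ?addr0 // => i _.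
  by case: eqP => [->|_]; rewrite ?ha0 ?mul0rn ?mulr0n.
have Et : tdeg v = tdeg u.
  rewrite tdeg_mkcm big_split /= Ht (bigD1 ord0) //= ?eqxx big1 ?addn0 => [|i /negbTE -> //].
  by rewrite subnKC.
have Ep : psimon v = psimon u by apply: val_inj; rewrite /= Ec Et.
have := fu v Ep; rewrite /lt_y Et ltnn eqxx /= negb_or => /andP[h _].
move: h; rewrite /v mkcmE eqxx -leqNgt => h.
apply/eqP; rewrite eqn_leq Dle /=; lia.
Qed.

Lemma fibminM u w : fibmin (mulcm u w) -> fibmin u.
Proof.
move=> H v e; apply/negP => lt.
have := H (mulcm v w); rewrite !psimonM e => /(_ erefl).
by rewrite lty_mul.
Qed.

Lemma fibminM' u w : fibmin (mulcm u w) -> fibmin w.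
Proof. by rewrite mulcmC; apply: fibminM. Qed.

Lemma gs_lt u v : fibmin u -> lty v u -> gsparse_lt ltM (psimon v) (psimon u).
Proof.
move=> fu H; have Du := deltaA_fibmin _ fu; have Dv := deltaA_le_u v.
have l0v := u0_le v; have l0u := u0_le u.
rewrite /gsparse_lt /sparse_lt /=.
move: (H); rewrite /lt_y; case/orP => [->//|/andP[/eqP e]].
rewrite e eqxx ltnn /=; case/orP => [lt0|/andP[/eqP e0]].
  have -> : (deltaA a (chipsi v) < deltaA a (chipsi u))%N.
    move: Du Dv l0v l0u lt0; rewrite e; move: (deltaA a _) (deltaA a _) (tdeg u) (u ord0) (v ord0) => *; lia.
  by [].
case/orP => [lM|/andP[/eqP ec lT]].
  case: (ltngtP (deltaA a (chipsi v)) (deltaA a (chipsi u))) => //= h.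
  move: Du Dv l0v l0u h; rewrite e e0; move: (deltaA a _) (deltaA a _) (tdeg u) (u ord0) => *; lia.
have Ep : psimon v = psimon u by apply: val_inj; rewrite /= ec e.
by have := fu v Ep; rewrite H.
Qed.

Lemma LM_psi g u : is_LM lty g u -> fibmin u ->
  is_LM (gsparse_lt ltM) (psi g) (psimon u) /\ (psi g)@_(psimon u) = g@_u.
Proof.
move=> [us Hu] fu.
have C : (psi g)@_(psimon u) = g@_u.
  rewrite psi_coef (@sum_fset1 _ _ _ _ u us) ?eqxx ?mulr1n // => v vs ne.
  have lt := Hu v vs ne; case: eqP => [e|_]; last by rewrite mulr0n.
  by have := fu v e; rewrite lt.
split => //; split.
  by rewrite -mcoeff_neq0 C mcoeff_neq0.
move=> q qs ne.
have [v vs ev] : exists2 v, v \in msupp g & psimon v = q.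
  case: (classic (exists2 v, v \in msupp g & psimon v = q)) => // H.
  move: qs; rewrite -mcoeff_neq0 psi_coef big_seq big1 ?eqxx // => v vs.
  by case: eqP => // e; exfalso; apply: H; exists v.
subst q; apply: gs_lt => //; apply: Hu => //; apply/eqP => e; move: ne; by rewrite e eqxx.
Qed.

Lemma fib_min p : exists u, psimon u = p /\ forall v, psimon v = p -> ~~ lty v u.
Proof.
have [u [e H]] := lty_min (fun u => psimon u = p) (psimon_surj p).
by exists u; split.
Qed.

Definition fmin p := proj1_sig (constructive_indefinite_description _ (fib_min p)).

Lemma fminP p : psimon (fmin p) = p /\ fibmin (fmin p).
Proof.
rewrite /fmin; case: constructive_indefinite_description => u [e H] /=.
by split => // v ev; apply: H; rewrite ev.
Qed.

Definition rep (f : {malg K[Sh a]}) : {malg K['X_{1..m.+1}]} :=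
  \sum_(p <- msupp f) << f@_p *g fmin p >>.

Lemma psi_rep f : psi (rep f) = f.
Proof.
rewrite /rep psi_sum [RHS]monalgE; apply: eq_bigr => p _.
by rewrite psiU (fminP p).1.
Qed.

Lemma rep_fib f u : u \in msupp (rep f) -> fibmin u.
Proof.
move=> us; case: (classic (exists p, u = fmin p)) => [[p ->]|H]; first exact: (fminP p).2.
exfalso; move: us; rewrite -mcoeff_neq0 /rep raddf_sum big1 ?eqxx // => p _.
by rewrite /= mcoeffU; case: eqP => // e; exfalso; apply: H; exists p.
Qed.

Lemma std_fib u : fibmin u -> ~ exists h, [/\ Tker a h, h != 0 & is_LM lty h u].
Proof.
move=> fu [h [Th hn LM]]; have [[us _] C] := LM_psi _ _ LM fu.
by move: us; rewrite Th msupp0.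
Qed.

Lemma JsubIG (S : {malg K['X_{1..m.+1}]} -> Prop) (G : seq {malg K['X_{1..m.+1}]}) :
  is_groebner lty (ideal_gen S) G ->
  forall h, ideal_gen S h -> ideal_gen (fun g => g \in G) h.
Proof.
move=> [GJ GB] h0 Jh0; apply: NNPP => nIG0.
have nz : forall h, ~ ideal_gen (fun g => g \in G) h -> h != 0.
  by move=> h nh; apply/eqP => e; apply: nh; rewrite e; apply: IG0.
have [u0 LM0] := @LM_exists _ _ lty h0 lty_trans lty_totalb (nz _ nIG0).
have [us [[hs [Jhs nIGs LMs]] Hmin]] := lty_min
  (fun u => exists h, [/\ ideal_gen S h, ~ ideal_gen (fun g => g \in G) h & is_LM lty h u])
  (ex_intro _ u0 (ex_intro _ h0 (And3 Jh0 nIG0 LM0))).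
have [g gG [gn [ug [uf [LMg LMf [w Ew]]]]]] := GB hs Jhs (nz _ nIGs).
have Euf : uf = us := @LM_uniq _ _ lty hs uf us lty_trans lty_irr LMf LMs.
rewrite {}Euf in Ew LMf; case: (LMg) => ugs Hg.
have gug : g@_ug != 0 by rewrite mcoeff_neq0.
pose c := hs@_us / g@_ug.
pose X := << c *g w >> * g.
pose h' := hs - X.
have Jh' : ideal_gen S h' by apply: IGsub => //; apply: IGmul; apply: GJ.
have nIG' : ~ ideal_gen (fun g => g \in G) h'.
  move=> H; apply: nIGs; have -> : hs = h' + X by rewrite /h' subrK.
  by apply: IGadd => //; apply: IGmul; apply: IGgen.
have [u' LM'] := @LM_exists _ _ lty h' lty_trans lty_totalb (nz _ nIG').
have CX : X@_us = c * g@_ug.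
  rewrite /X malgM_def fgmulUg raddf_sum (@sum_fset1 _ _ _ _ ug ugs) /=.
    have -> : mmul w ug = us by rewrite -Ew /= mulcmC.
    by rewrite mcoeffU eqxx mulr1n.
  move=> k ks ne; rewrite /= mcoeffU; case: eqP => // e; exfalso.
  have := lty_mul _ _ w (Hg k ks ne); rewrite Ew -e /= mulcmC.
  by rewrite (negbTE (lty_irr _)).
have Cus : h'@_us = 0.
  rewrite /h' mcoeffB CX /c divfK //; exact: subrr.
case: (LM') => u's Hu'.
have ne : u' != us by apply/eqP => e; move: u's; rewrite e -mcoeff_neq0 Cus eqxx.
have lt' : lty u' us.
  have := msuppB_le hs X; move/fsubsetP/(_ u' u's); rewrite inE => /orP[u'hs|u'X].
    by case: LMs => _; apply.
  have [k1 [k2 [k1s k2s Ek]]] := msuppM_le u'X.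
  have := fsubsetP msuppU_le _ k1s; rewrite inE => /eqP Ek1; subst k1.
  have ne2 : k2 != ug.
    apply/eqP => e; move: ne; rewrite Ek e.
    have -> : mmul w ug = us by rewrite -Ew /= mulcmC.
    by rewrite eqxx.
  have -> : u' = mulcm k2 w by rewrite Ek /= mulcmC.
  by have := lty_mul _ _ w (Hg k2 k2s ne2); rewrite Ew.
by have := Hmin u' (ex_intro _ h' (And3 Jh' nIG' LM')); rewrite lt'.
Qed.

End Main.

Theorem mainTheorem2
  (K : fieldType) (hK : [pchar K] =i pred0)
  (R : realFieldType) (n : nat) (V : seq 'rV[R]_n)
  (m : nat) (a : 'I_m.+1 -> 'rV[int]_n)
  (ha_inj : injective a) (ha0 : a ord0 = 0)
  (hM0 : in_conv V 0)
  (ha_enum : forall z : 'rV[int]_n, in_conv V (lattice_pt R z) <-> exists i, a i = z)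
  (hpointed : forall s, inSM a s -> inSM a (- s) -> s = 0)
  (ltM : rel 'rV[int]_n) (hltM : monomial_order (inSM a) +%R ltM)
  (ltT : rel 'X_{1..m.+1}) (hltT : monomial_order (fun _ => True) (@mulcm _) ltT)
  (I : {malg K[Sh a]} -> Prop) (hI : homogeneous_ideal I)
  (G : seq {malg K['X_{1..m.+1}]}) :
  is_groebner (lt_y a ltM ltT)
    (ideal_gen (fun r => phi_img ltM ltT I r \/ Tker a r)) G ->
  is_sparse_groebner ltM I (map (@psi _ _ a K) G).
Proof.
move=> HG; case: (HG) => GJ GB.
case: hI => [[I0 ID IM] _].
set S := (fun r => phi_img ltM ltT I r \/ Tker a r).
have psiS : forall x, S x -> I (psi a x).
  move=> x [[f [If [g [pg [Tk _]]]]] | Tk].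
    move: Tk; rewrite /Tker psiB => /eqP; rewrite subr_eq0 => /eqP <-.
    by rewrite pg.
  by rewrite Tk.
have psiJ : forall x, ideal_gen S x -> I (psi a x).
  move=> x [l [hl ->]]; rewrite psi_sum.
  elim: l hl => [|p l IH] hl; first by rewrite big_nil.
  rewrite big_cons; apply: ID; last by apply: IH => q ql; apply: hl; rewrite inE ql orbT.
  by rewrite psiM; apply: IM; apply: psiS; apply: hl; rewrite inE eqxx.
have repJ : forall f, I f -> ideal_gen S (rep n m a ltM ltT hltM hltT K f) /\
                          psi a (rep n m a ltM ltT hltM hltT K f) = f.
  move=> f If; split; last exact: psi_rep.
  apply: IGgen; left; exists f; split => //.
  exists (rep n m a ltM ltT hltM hltT K f); split; first exact: psi_rep.
  split; first by rewrite /Tker subrr psi0.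
  move=> u us; exact: (@std_fib n m a ha0 ltM ltT K u (@rep_fib n m a ltM ltT hltM hltT K f u us)).
split.
- by move=> x /mapP [g gG ->]; apply: psiJ; apply: GJ.
- move=> f If; have [Jr pr] := repJ f If.
  have [l [hl El]] := @JsubIG n m a ltM ltT hltM hltT K _ G HG _ Jr.
  exists [seq (psi a p.1, psi a p.2) | p <- l]; split.
    by move=> p /mapP [q ql ->] /=; apply: map_f; apply: hl.
  rewrite -pr El psi_sum big_map; apply: eq_bigr => p _; exact: psiM.
move=> f If fn0.
set r := rep n m a ltM ltT hltM hltT K f.
have [Jr pr] := repJ f If.
have rn : r != 0 by apply/eqP => e; move: fn0; rewrite -pr -/r e psi0 eqxx.
have [g gG [gn [ug [uf [LMg LMf [w Ew]]]]]] := GB r Jr rn.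
have fuf : fibmin n m a ltM ltT uf by apply: (@rep_fib n m a ltM ltT hltM hltT K f); case: LMf.
have fug : fibmin n m a ltM ltT ug by apply: (@fibminM n m a ltM ltT hltM hltT ug w); rewrite Ew.
have fw : fibmin n m a ltM ltT w by apply: (@fibminM' n m a ltM ltT hltM hltT ug w); rewrite Ew.
have [LMg' Cg] := @LM_psi n m a ha0 ltM ltT K g ug LMg fug.
have [LMf' _] := @LM_psi n m a ha0 ltM ltT K r uf LMf fuf.
exists (psi a g); first by apply: map_f.
split.
  have : (psi a g)@_(psimon a ug) != 0 by rewrite Cg mcoeff_neq0; case: LMg.
  by apply: contraNneq => ->; rewrite mcoeff0.
exists (psimon a ug), (psimon a uf); split; [exact: LMg' | by rewrite -pr | ].
exists (psimon a w); split.
  by rewrite -Ew; exact: (esym (psimonM _ _ _ _ _)).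
have E : forall u, fibmin n m a ltM ltT u -> sdeg (psimon a u) = (tdeg u - u ord0)%N.
  by move=> u fu; exact: (@deltaA_fibmin n m a ha0 ltM ltT u fu).
rewrite (E _ fug) (E _ fw) (E _ fuf) -Ew tdegM mulcmE.
have := @u0_le m ug; have := @u0_le m w; lia.
Qed.
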